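(* Let $X$ be an $n$-dimensional polyhedral normed space and let $Y \subseteq X$ be a $k$-dimensional subspace, where $1 \leq k \leq n-1$. Then there exists a projection $P \in \mathcal{P}_{\min}(X, Y)$ with at least $n$ norming pairs.
   Context: A normed space $X=(\mathbb{R}^n,\|\cdot\|)$ is polyhedral if its unit ball $B_X$ is a convex polytope; then $\mathrm{ext}\,B_X$ and $\mathrm{ext}\,B_{X^*}$ (extreme points of the unit balls of $X$ and its dual) are finite. A projection onto $Y$ is a linear $P:X\to Y$ with $P|_Y=\mathrm{id}_Y$; $\lambda(Y,X)$ is the infimum of the operator norms of such projections and $\mathcal{P}_{\min}(X,Y)$ is the set of projections of norm $\lambda(Y,X)$. A norming pair for a projection $P$ is a pair $(x,f)\in \mathrm{ext}\,B_X\times \mathrm{ext}\,B_{X^*}$ with $f(P(x))=\|P\|$. *)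

(* Defs.v *)
From HB Require Import structures.
From mathcomp Require Import all_boot all_order all_algebra.
From mathcomp Require Import boolp classical_sets reals.
Set Implicit Arguments. Unset Strict Implicit. Unset Printing Implicit Defensive.
Import Order.TTheory GRing.Theory Num.Theory.
Local Open Scope ring_scope.
Local Open Scope classical_set_scope.

(* X = (R^n, N): vectors are row vectors 'rV[R]_n, linear maps are matrices
   acting on the right (x |-> x *m P), functionals are represented by row
   vectors f acting by the standard pairing. *)
Section Defs.
Variable R : realType.
Variable n : nat.
Notation vec := 'rV[R]_n.

Definition fapp (f x : vec) : R := \sum_(i < n) f 0 i * x 0 i.

Definition is_norm (N : vec -> R) : Prop :=
  [/\ forall x, 0 <= N x,
      forall x, N x = 0 -> x = 0,
      forall (a : R) x, N (a *: x) = `|a| * N x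
    & forall x y, N (x + y) <= N x + N y].

Definition unit_ball (N : vec -> R) : set vec := [set x | N x <= 1].

Definition conv_hull (m : nat) (V : 'I_m -> vec) : set vec :=
  [set x | exists w : 'I_m -> R,
     [/\ forall i, 0 <= w i, \sum_(i < m) w i = 1
       & x = \sum_(i < m) w i *: V i]].

Definition polytope (S : set vec) : Prop :=
  exists m (V : 'I_m -> vec), S = conv_hull V.

Definition polyhedral_norm (N : vec -> R) : Prop :=
  is_norm N /\ polytope (unit_ball N).

Definition dual_unit_ball (N : vec -> R) : set vec :=
  [set f | forall x, N x <= 1 -> fapp f x <= 1].

Definition ext (S : set vec) : set vec :=
  [set x | S x /\ forall y z (t : R), S y -> S z -> 0 < t -> t < 1 ->
             x = t *: y + (1 - t) *: z -> y = z].

Definition opnorm (N : vec -> R) (P : 'M[R]_n) : R :=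
  sup [set N (x *m P) | x in unit_ball N].

(* P is a projection of X onto the subspace Y (= row space of the matrix Y) *)
Definition is_projection (Y P : 'M[R]_n) : Prop :=
  (forall x : vec, (x *m P <= Y)%MS) /\
  (forall y : vec, (y <= Y)%MS -> y *m P = y).

Definition lambda (N : vec -> R) (Y : 'M[R]_n) : R :=
  inf [set opnorm N P | P in is_projection Y].

Definition minimal_projection (N : vec -> R) (Y P : 'M[R]_n) : Prop :=
  is_projection Y P /\ opnorm N P = lambda N Y.

Definition norming_pair (N : vec -> R) (P : 'M[R]_n) (x f : vec) : Prop :=
  [/\ ext (unit_ball N) x, ext (dual_unit_ball N) f
    & fapp f (x *m P) = opnorm N P].

End Defs.

(* Main.v *)
Require Import Defs.
From HB Require Import structures.
From mathcomp Require Import all_boot all_order all_algebra.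
From mathcomp Require Import boolp classical_sets reals.
From mathcomp Require Import ring lra zify.
Import Order.TTheory GRing.Theory Num.Theory.
Local Open Scope ring_scope.


Section Dot.
Context {R : realType}.

Definition dot {m : nat} (u v : 'rV[R]_m) : R := \sum_(i < m) u 0 i * v 0 i.

Lemma dotC {m} (u v : 'rV[R]_m) : dot u v = dot v u.
Proof. by apply: eq_bigr => i _; rewrite mulrC. Qed.

Lemma dotDr {m} (u v w : 'rV[R]_m) : dot u (v + w) = dot u v + dot u w.
Proof. by rewrite /dot -big_split; apply: eq_bigr => i _; rewrite !mxE mulrDr. Qed.

Lemma dotZr {m} (a : R) (u v : 'rV[R]_m) : dot u (a *: v) = a * dot u v.
Proof. by rewrite /dot mulr_sumr; apply: eq_bigr => i _; rewrite !mxE mulrCA. Qed.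

Lemma dotDl {m} (u v w : 'rV[R]_m) : dot (v + w) u = dot v u + dot w u.
Proof. by rewrite dotC dotDr dotC (dotC w). Qed.

Lemma dotZl {m} (a : R) (u v : 'rV[R]_m) : dot (a *: v) u = a * dot v u.
Proof. by rewrite dotC dotZr dotC. Qed.

Lemma dot0r {m} (u : 'rV[R]_m) : dot u 0 = 0.
Proof. by rewrite /dot big1 // => i _; rewrite mxE mulr0. Qed.

Lemma dot0l {m} (u : 'rV[R]_m) : dot 0 u = 0.
Proof. by rewrite dotC dot0r. Qed.

Lemma dotNr {m} (u v : 'rV[R]_m) : dot u (- v) = - dot u v.
Proof. by rewrite -scaleN1r dotZr mulN1r. Qed.

Lemma dotNl {m} (u v : 'rV[R]_m) : dot (- v) u = - dot v u.
Proof. by rewrite dotC dotNr dotC. Qed.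

Lemma dotBr {m} (u v w : 'rV[R]_m) : dot u (v - w) = dot u v - dot u w.
Proof. by rewrite dotDr dotNr. Qed.

Lemma dotBl {m} (u v w : 'rV[R]_m) : dot (v - w) u = dot v u - dot w u.
Proof. by rewrite dotDl dotNl. Qed.

Lemma dot_sumr {m} (u : 'rV[R]_m) (I : Type) (r : seq I) (P : pred I) (F : I -> 'rV[R]_m) :
  dot u (\sum_(i <- r | P i) F i) = \sum_(i <- r | P i) dot u (F i).
Proof.
elim/big_rec2: _ => [|i y v _ <-]; first by rewrite dot0r.
by rewrite dotDr.
Qed.

Lemma dot_suml {m} (u : 'rV[R]_m) (I : Type) (r : seq I) (P : pred I) (F : I -> 'rV[R]_m) :
  dot (\sum_(i <- r | P i) F i) u = \sum_(i <- r | P i) dot (F i) u.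
Proof. by rewrite dotC dot_sumr; apply: eq_bigr => i _; rewrite dotC. Qed.

Lemma dot_self_gt0 {m} (u : 'rV[R]_m) : u != 0 -> 0 < dot u u.
Proof.
move=> nz; have [i ui] : exists i, u 0 i != 0.
  apply/existsP; apply: contraR nz => /existsPn h; apply/eqP/matrixP => a j.
  by rewrite (ord1 a) mxE; move: (h j); rewrite negbK => /eqP.
rewrite /dot (bigD1 i) //=.
have h1 : 0 < u 0 i * u 0 i by rewrite -expr2 exprn_even_gt0.
have h2 : 0 <= \sum_(j < m | j != i) u 0 j * u 0 j.
  by apply: sumr_ge0 => j _; rewrite -expr2 sqr_ge0.
lra.
Qed.

Lemma dot_delta {m} (u : 'rV[R]_m) i : dot u (delta_mx 0 i) = u 0 i.
Proof.
rewrite /dot (bigD1 i) //= big1 => [|j /negPf ji]; first by rewrite mxE !eqxx mulr1 addr0.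
by rewrite mxE ji andbF mulr0.
Qed.

Lemma dot_row_mx m1 m2 (u1 v1 : 'rV[R]_m1) (u2 v2 : 'rV[R]_m2) :
  dot (row_mx u1 u2) (row_mx v1 v2) = dot u1 v1 + dot u2 v2.
Proof.
rewrite /dot big_split_ord /=; congr (_ + _); apply: eq_bigr => i _.
  by rewrite !row_mxEl.
by rewrite !row_mxEr.
Qed.

Lemma dot_mulmx {m} p (u : 'rV[R]_m) (A : 'M[R]_(p, m)) (x : 'rV[R]_p) :
  dot u (x *m A) = dot (u *m A^T) x.
Proof.
rewrite /dot; under eq_bigr do rewrite mxE big_distrr.
rewrite exchange_big; apply: eq_bigr => j _; rewrite mxE big_distrl.
by apply: eq_bigr => i _; rewrite !mxE /=; ring.
Qed.

Lemma lin_dot m (phi : 'rV[R]_m -> R) :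
  (forall a u v, phi (a *: u + v) = a * phi u + phi v) ->
  forall u, phi u = dot (\row_i phi (delta_mx 0 i)) u.
Proof.
move=> lin u.
have phi0 : phi 0 = 0.
  by have := lin 1 0 0; rewrite scaler0 addr0 mul1r => /eqP; rewrite addrC -subr_eq subrr eq_sym => /eqP.
rewrite {1}(row_sum_delta u) /dot.
elim/big_rec2: _ => [|i y v _ <-]; first by [].
by rewrite lin mxE mulrC.
Qed.

Definition cone {m} (s : seq 'rV[R]_m) (b : 'rV[R]_m) :=
  exists l : nat -> R, (forall i, 0 <= l i) /\ b = \sum_(i < size s) l i *: s`_i.

Lemma farkas_gen m p : forall (s : seq 'rV[R]_m) b, size s = p ->
  cone s b \/ exists y, (forall x, x \in s -> dot y x <= 0) /\ 0 < dot y b.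
Proof.
elim: p => [|p IH] [|a t] b //=.
  move=> _; case: (eqVneq b 0) => [->|nz].
    by left; exists (fun=> 0); split => //; rewrite big1 // => i _; rewrite scale0r.
  by right; exists b; split; [move=> x; rewrite in_nil | exact: dot_self_gt0].
case=> st.
have [[l [l0 bE]]|[y [yt yb]]] := IH t b st.
  left; exists (fun i => if i is i'.+1 then l i' else 0); split.
    by case.
  by rewrite big_ord_recl /= scale0r add0r bE.
have [ya|ya] := lerP (dot y a) 0.
  right; exists y; split => // x; rewrite in_cons => /orP[/eqP->//|]; exact: yt.
set al := dot y a.
pose g (x : 'rV[R]_m) := al *: x - dot y x *: a.
have g0 : g 0 = 0 by rewrite /g scaler0 dot0r scale0r subrr.
have := IH (map g t) (g b); rewrite size_map => /(_ st) [[l [l0 gbE]]|[y' [y't y'b]]].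
  left.
  exists (fun i => if i is i'.+1 then l i' else (dot y b - \sum_(j < size t) l j * dot y t`_j) / al).
  split.
    case => [|i] //; apply: divr_ge0; last exact: ltW.
    rewrite subr_ge0; apply: le_trans (ltW yb).
    apply: sumr_le0 => j _; apply: mulr_ge0_le0 => //; apply: yt; exact: mem_nth.
  rewrite big_ord_recl /=.
  move: gbE; rewrite size_map => gbE.
  have E : \sum_(i < size t) l i *: (map g t)`_i =
      al *: (\sum_(i < size t) l i *: t`_i) - (\sum_(i < size t) l i * dot y t`_i) *: a.
    rewrite scaler_sumr scaler_suml -sumrB; apply: eq_bigr => i _.
    by rewrite (nth_map 0) // /g scalerBr !scalerA mulrC.
  rewrite E /g in gbE.
  set S := \sum_(i < size t) l i *: t`_i in gbE *.
  set C := \sum_(i < size t) l i * dot y t`_i in gbE *.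
  apply: (scalerI (lt0r_neq0 ya)).
  rewrite scalerDr scalerA mulrC divfK ?lt0r_neq0 // scalerBl.
  move/eqP: gbE; rewrite subr_eq => /eqP gbE.
  have H (V : zmodType) (B X Y Z : V) : B = X - Y + Z -> B = Z - Y + X.
    by move->; rewrite addrC addrA addrAC.
  exact: H gbE.
right; exists (al *: y' - dot y' a *: y); split.
  move=> x; rewrite in_cons => /orP[/eqP->|xt].
    by rewrite dotBl !dotZl -/al mulrC subrr.
  have := y't (g x) (map_f g xt).
  by rewrite /g dotBr !dotZr dotBl !dotZl -/al; lra.
by rewrite dotBl !dotZl -/al; move: y'b; rewrite /g dotBr !dotZr; lra.
Qed.

Lemma farkas_fin {M k : nat} (A : 'I_k -> 'rV[R]_M) (b : 'rV[R]_M) :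
  (exists l : 'I_k -> R, (forall i, 0 <= l i) /\ b = \sum_i l i *: A i) \/
  exists y, (forall i, dot y (A i) <= 0) /\ 0 < dot y b.
Proof.
case: k A => [|k'] A.
  have := @farkas_gen M 0 [::] b erefl; case => [[l [_ e]]|[y [_ yb]]].
    by left; exists (fun=> 0); split => //; rewrite e !big_ord0.
  by right; exists y; split => // [[]].
pose s := mkseq (fun i => A (inord i)) k'.+1.
have := @farkas_gen M (size s) s b erefl; case => [[l [l0 e]]|[y [hy yb]]].
  left; exists (fun i => l i); split => //.
  rewrite e size_mkseq; apply: eq_bigr => i _.
  by rewrite nth_mkseq ?inord_val.
right; exists y; split => // i; apply: hy.
have -> : A i = s`_i by rewrite nth_mkseq ?inord_val.
by apply: mem_nth; rewrite size_mkseq.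
Qed.

Lemma le_sum_term (I : finType) (F : I -> R) j : (forall i, 0 <= F i) ->
  F j <= \sum_i F i.
Proof.
move=> h; rewrite (bigD1 j) //= -[X in X <= _]addr0 lerD2l.
by apply: sumr_ge0 => i _.
Qed.

End Dot.


Section Mins.
Context {R : realType}.

Lemma seq_min (T : eqType) (s : seq T) (g : T -> R) : s != [::] ->
  exists2 x, x \in s & forall y, y \in s -> g x <= g y.
Proof.
elim: s => [//|x s IH] _.
case: (eqVneq s [::]) => [->|/IH [z zs hz]].
  by exists x; rewrite ?mem_head // => y; rewrite inE => /eqP->.
case: (lerP (g x) (g z)) => hxz.
  exists x; first exact: mem_head.
  by move=> y; rewrite inE => /orP[/eqP->//|/hz]; apply: le_trans.
exists z; first by rewrite inE zs orbT.
by move=> y; rewrite inE => /orP[/eqP->|/hz //]; apply: ltW.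
Qed.

Lemma set_min (I : finType) (J : {set I}) (g : I -> R) : J != finset.set0 ->
  exists2 i, i \in J & forall j, j \in J -> g i <= g j.
Proof.
move=> nz; have : enum J != [::].
  apply: contraNneq nz => e; apply/eqP/setP => x; rewrite inE -mem_enum e.
  by [].
move/(@seq_min _ _ g) => [i]; rewrite mem_enum => iJ hi; exists i => // j jJ.
by apply: hi; rewrite mem_enum.
Qed.

Lemma seq_ub (T : Type) (s : seq T) (g : T -> R) :
  exists t, forall x, List.In x s -> g x <= t.
Proof.
elim: s => [|x s [t ht]]; first by exists 0.
exists (Num.max (g x) t) => y /= [<-|ys]; first by rewrite le_max lexx.
by rewrite le_max ht ?orbT.
Qed.

End Mins.

Section LP.
Context {R : realType}.
Variable r : nat.
Variable I : finType.
Variable a : I -> 'rV[R]_r.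
Variable b : I -> R.

Definition feas (u : 'rV[R]_r) := forall i, dot (a i) u <= b i.
Definition act (u : 'rV[R]_r) : {set I} := [set i | dot (a i) u == b i].
Definition vertex (u : 'rV[R]_r) :=
  feas u /\ forall d, (forall i, i \in act u -> dot (a i) d = 0) -> d = 0.
Definition noline := forall u d, (forall s : R, feas (u + s *: d)) -> d = 0.

Lemma move_step u d : feas u -> (forall i, i \in act u -> dot (a i) d = 0) ->
  (exists i, 0 < dot (a i) d) ->
  exists s, [/\ 0 <= s, feas (u + s *: d) & act u \proper act (u + s *: d)].
Proof.
move=> fu orth [i1 hi1].
pose J := [set i | 0 < dot (a i) d].
have : J != finset.set0 by apply/set0Pn; exists i1; rewrite inE.
move/(@set_min _ _ _ (fun i => (b i - dot (a i) u) / dot (a i) d)) => [i0].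
rewrite inE => hi0 hmin.
set s := (b i0 - dot (a i0) u) / dot (a i0) d.
have s0 : 0 <= s by apply: divr_ge0; [rewrite subr_ge0; exact: fu | exact: ltW].
exists s; split => //.
- move=> i; rewrite dotDr dotZr.
  case: (ltrP 0 (dot (a i) d)) => hd.
    have := hmin i; rewrite inE => /(_ hd); rewrite -/s ler_pdivlMr // => h.
    rewrite mulrC in h; lra.
  have : s * dot (a i) d <= 0 by apply: mulr_ge0_le0.
  have := fu i; lra.
- apply/properP; split.
    apply/fintype.subsetP => i; rewrite !inE => /eqP h; apply/eqP.
    by rewrite dotDr dotZr (orth i) ?inE ?h // mulr0 addr0.
  exists i0.
    by rewrite inE dotDr dotZr /s divfK ?lt0r_neq0 // addrC subrK.
  apply/negP => /orth; lra.
Qed.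

Lemma descent c u (m0 : R) : noline -> (forall z, feas z -> m0 <= dot c z) ->
  feas u -> exists v, vertex v /\ dot c v <= dot c u.
Proof.
move=> nl bnd.
suff: forall k u, (#|I| - #|act u| <= k)%N -> feas u -> exists v, vertex v /\ dot c v <= dot c u.
  by move=> /(_ #|I| u); apply; rewrite leq_subr.
elim => [|k IH] {}u hk fu; (case: (pselect (vertex u)) => vu; first by exists u).
- exfalso; apply: vu; split => // d hd.
  have : act u = finset.setT.
    apply/eqP; rewrite eqEcard finset.subsetT cardsT /=; by move: hk; rewrite leqn0 subn_eq0.
  move=> aT.
  apply: (nl u d) => s i; rewrite dotDr dotZr hd ?aT ?inE // mulr0 addr0; exact: fu.
- have [d [hd dn0]] : exists d, (forall i, i \in act u -> dot (a i) d = 0) /\ d != 0.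
    apply: contrapT => H; apply: vu; split => // d hd; apply/eqP.
    by apply: contrapT => nz; apply: H; exists d; split => //; apply/negP.
  have step : forall d', (forall i, i \in act u -> dot (a i) d' = 0) ->
      dot c d' <= 0 -> (exists i, 0 < dot (a i) d') ->
      exists v, vertex v /\ dot c v <= dot c u.
    move=> d' hd' cd' ex.
    have [s [s0 fu' pr]] := @move_step u d' fu hd' ex.
    have := IH (u + s *: d').
    case.
    + have := proper_card pr; move: hk.
      have : (#|act (u + s *: d')| <= #|I|)%N by apply: max_card.
      move=> h1 h2 h3; lia.
    + exact: fu'.
    + move=> v [vv hv]; exists v; split => //; apply: le_trans hv _.
      rewrite dotDr dotZr; have : s * dot c d' <= 0 by apply: mulr_ge0_le0.
      lra.
  pose d' := if dot c d <= 0 then d else - d.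
  have hd' : forall i, i \in act u -> dot (a i) d' = 0.
    by move=> i /hd; rewrite /d'; case: ifP => _; rewrite ?dotNr => ->; rewrite ?oppr0.
  have cd' : dot c d' <= 0.
    rewrite /d'; case: ifP => // /negbT; rewrite -ltNge dotNr; lra.
  have dn0' : d' != 0 by rewrite /d'; case: ifP => _; rewrite ?oppr_eq0.
  case: (pselect (exists i, 0 < dot (a i) d')) => ex; first exact: (step d' hd' cd' ex).
  have le0 : forall i, dot (a i) d' <= 0.
    by move=> i; rewrite leNgt; apply/negP => h; apply: ex; exists i.
  case: (ltrP (dot c d') 0) => cd0.
    exfalso.
    pose s := (dot c u - m0 + 1) / (- dot c d').
    have s0 : 0 < s.
      apply: divr_gt0; last lra.
      have := bnd u fu; lra.
    have f' : feas (u + s *: d').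
      move=> i; rewrite dotDr dotZr.
      have : s * dot (a i) d' <= 0 by apply: mulr_ge0_le0 => //; exact: ltW.
      have := fu i; lra.
    have e : s * dot c d' = - (dot c u - m0 + 1).
      by rewrite /s -mulrA invrN mulNr mulVf ?mulrN1 // lt_eqF.
    move: (bnd _ f'); rewrite dotDr dotZr e; lra.
  have cd00 : dot c d' = 0 by apply/eqP; rewrite eq_le cd0 cd'.
  case: (pselect (exists i, 0 < dot (a i) (- d'))) => ex2.
    apply: step ex2.
      by move=> i /hd'; rewrite dotNr => ->; rewrite oppr0.
    by rewrite dotNr cd00 oppr0.
  exfalso; move/eqP: dn0'; apply; apply: (nl u d') => s i.
  rewrite dotDr dotZr.
  have h1 : dot (a i) d' = 0.
    apply/eqP; rewrite eq_le le0 /=; rewrite leNgt; apply/negP => h; apply: ex2.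
    by exists i; rewrite dotNr oppr_gt0.
  rewrite h1 mulr0 addr0; exact: fu.
Qed.

End LP.

Arguments feas {R r I} a b u.
Arguments act {R r I} a b u.
Arguments vertex {R r I} a b u.
Arguments noline {R r I} a b.
Arguments descent {R r I a b} c u m0.


Section LP2.
Context {R : realType}.
Variable r : nat.
Variable I : finType.
Variable a : I -> 'rV[R]_r.
Variable b : I -> R.

Notation feas := (feas a b).
Notation act := (act a b).
Notation vertex := (vertex a b).
Notation noline := (noline a b).

Lemma vertex_unique v w : vertex v -> act v = act w -> w = v.
Proof.
move=> [fv hv] e; apply/eqP; rewrite -subr_eq0; apply/eqP; apply: hv => i iv.
have iw : i \in act w by rewrite -e.
move: iv iw; rewrite !inE => /eqP h1 /eqP h2; by rewrite dotBr h1 h2 subrr.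
Qed.

Lemma vertices_finite : exists vs : seq 'rV[R]_r, uniq vs /\ forall v, vertex v <-> v \in vs.
Proof.
suff [vs [h1 h2]] : exists vs : seq 'rV[R]_r, (forall v, v \in vs -> vertex v) /\
    forall v, vertex v -> act v \in enum [set: {set I}] -> v \in vs.
  exists (undup vs); split; first exact: undup_uniq.
  move=> v; rewrite mem_undup; split; last exact: h1.
  by move=> vv; apply: h2 => //; rewrite mem_enum inE.
elim: (enum _) => [|J Js [vs [h1 h2]]]; first by exists [::].
case: (pselect (exists v, vertex v /\ act v = J)) => [[v [vv av]]|nex].
  exists (v :: vs); split.
    by move=> w; rewrite inE => /orP[/eqP->//|/h1].
  move=> w vw; rewrite inE => /orP[/eqP aw|]; last by move=> /(h2 _ vw) wv; rewrite inE wv orbT.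
  by rewrite (@vertex_unique v w vv) ?mem_head // av aw.
exists vs; split => // w vw; rewrite inE => /orP[/eqP aw|/(h2 _ vw)//].
by exfalso; apply: nex; exists w.
Qed.

Lemma lp_min c (m0 : R) : noline -> (forall z, feas z -> m0 <= dot c z) ->
  forall u, feas u -> exists v, vertex v /\ forall z, feas z -> dot c v <= dot c z.
Proof.
move=> nl bnd u fu.
have [vs [_ hvs]] := vertices_finite.
have [w [vw _]] := descent _ _ _ nl bnd fu.
have : vs != [::] by apply/eqP => e; move: (proj1 (hvs w) vw); rewrite e.
move/(@seq_min _ _ _ (fun v => dot c v)) => [v vin hv].
exists v; split; first exact/hvs.
move=> z fz; have [w' [vw' hw']] := descent _ _ _ nl bnd fz.
by apply: le_trans hw'; apply: hv; apply/hvs.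
Qed.

Lemma vertex_extreme v : vertex v -> forall y z (t : R), feas y -> feas z ->
  0 < t -> t < 1 -> v = t *: y + (1 - t) *: z -> y = z.
Proof.
move=> [fv hv] y z t fy fz t0 t1 e.
apply/eqP; rewrite -subr_eq0; apply/eqP; apply: hv => i; rewrite inE e => /eqP h.
move: h; rewrite dotDr !dotZr => h.
have p1 : 0 <= t * (b i - dot (a i) y) by apply: mulr_ge0; [lra | have := fy i; lra].
have p2 : 0 <= (1 - t) * (b i - dot (a i) z) by apply: mulr_ge0; [lra | have := fz i; lra].
have s0 : t * (b i - dot (a i) y) + (1 - t) * (b i - dot (a i) z) = 0.
  rewrite !mulrBr -h; ring.
have q1 : t * (b i - dot (a i) y) = 0 by lra.
have q2 : (1 - t) * (b i - dot (a i) z) = 0 by lra.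
move/eqP: q1; rewrite mulf_eq0 => /orP[/eqP|/eqP]; first lra.
move/eqP: q2; rewrite mulf_eq0 => /orP[/eqP|/eqP]; first lra.
rewrite dotBr; lra.
Qed.

Lemma vertex_count v : vertex v -> (r <= #|act v|)%N.
Proof.
move=> [fv hv]; rewrite leqNgt; apply/negP => hlt.
pose A := \matrix_(j < r, l < #|act v|) (a (enum_val l)) 0 j.
have rk : (0 < \rank (kermx A))%N.
  rewrite mxrank_ker; have := rank_leq_col A; lia.
have : kermx A != 0 by rewrite -mxrank_eq0 -lt0n.
move=> nz; have [i ri] : exists i, row i (kermx A) != 0.
  apply/existsP; apply: contraR nz => /existsPn h; apply/eqP/row_matrixP => i.
  by move: (h i); rewrite negbK row0 => /eqP.
set d := row i (kermx A) in ri.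
have dA : d *m A = 0 by rewrite /d -row_mul mulmx_ker row0.
move/eqP: ri; apply; apply: hv => j jv.
move/matrixP: dA => /(_ 0 (enum_rank_in jv j)).
by rewrite !mxE => h; rewrite -[RHS]h /dot; apply: eq_bigr => k _; rewrite [A _ _]mxE enum_rankK_in // mulrC.
Qed.

Lemma box_noline (C : R) : (forall u, feas u -> forall j, `|u 0 j| <= C) -> noline.
Proof.
move=> box u d hs; apply/matrixP => i j; rewrite (ord1 i) mxE.
apply/eqP; apply: contraT => dj.
pose s := (C + 1 + `|u 0 j|) / d 0 j.
have := box _ (hs s) j; rewrite !mxE /s divfK //.
have h0 : 0 <= C by apply: le_trans (box _ (hs 0) j).
have := ler_norm (- u 0 j); rewrite normrN => h1.
rewrite ler_norml; lra.
Qed.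

Lemma box_bound (C : R) c : (forall u, feas u -> forall j, `|u 0 j| <= C) ->
  exists m0, forall z, feas z -> m0 <= dot c z.
Proof.
move=> box; exists (- \sum_(j < r) `|c 0 j| * C) => z fz.
rewrite /dot -sumrN; apply: ler_sum => j _.
have h := box _ fz j.
have : `|c 0 j * z 0 j| <= `|c 0 j| * C by rewrite normrM ler_wpM2l.
rewrite ler_norml => /andP[] //.
Qed.

End LP2.

Arguments vertex_unique {R r I a b} v w.
Arguments vertices_finite {R r I} a b.
Arguments lp_min {R r I a b} c m0.
Arguments vertex_extreme {R r I a b} v.
Arguments vertex_count {R r I a b} v.
Arguments box_noline {R r I a b} C.
Arguments box_bound {R r I a b} C c.


Section Norm.
Context {R : realType}.
Context {n : nat} {N : 'rV[R]_n -> R}.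
Hypothesis hN : is_norm N.

Lemma N0 : N 0 = 0.
Proof. by case: hN => _ _ hom _; rewrite -(scale0r 0) hom normr0 mul0r. Qed.

Lemma NN x : N (- x) = N x.
Proof. by case: hN => _ _ hom _; rewrite -scaleN1r hom normrN normr1 mul1r. Qed.

Lemma NZ a x : N (a *: x) = `|a| * N x.
Proof. by case: hN. Qed.

Lemma Nge0 x : 0 <= N x.
Proof. by case: hN. Qed.

Lemma Ntri x y : N (x + y) <= N x + N y.
Proof. by case: hN. Qed.

Lemma Ngt0 x : x != 0 -> 0 < N x.
Proof.
move=> nz; rewrite lt_def Nge0 andbT; apply: contra nz => /eqP h.
by case: hN => _ h0 _ _; rewrite (h0 _ h).
Qed.

Lemma N_normalize x : x != 0 -> N ((N x)^-1 *: x) = 1.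
Proof.
move=> nz; rewrite NZ ger0_norm ?invr_ge0 ?Nge0 // mulVf //.
by apply: lt0r_neq0; apply: Ngt0.
Qed.

Lemma Nsum (I : finType) (w : I -> R) (X : I -> 'rV[R]_n) : (forall i, 0 <= w i) ->
  N (\sum_i w i *: X i) <= \sum_i w i * N (X i).
Proof.
move=> w0; elim/big_rec2: _ => [|i y1 y2 _ h]; first by rewrite N0.
apply: le_trans (Ntri _ _) _; rewrite NZ ger0_norm //; lra.
Qed.

Definition dualb (f : 'rV[R]_n) := forall x, N x <= 1 -> dot f x <= 1.

Lemma dual_le f x : dualb f -> dot f x <= N x.
Proof.
move=> hf; case: (eqVneq x 0) => [->|nz]; first by rewrite dot0r N0.
have p := @Ngt0 x nz.
have := hf ((N x)^-1 *: x); rewrite N_normalize // => /(_ (le_refl _)).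
by rewrite dotZr mulrC ler_pdivrMr // mul1r.
Qed.

End Norm.
Arguments dualb {R n} N f.


Lemma dot_hom {R : realType} {n} (y : 'rV[R]_(n + 1)) x (al : R) :
  dot y (row_mx x al%:M) = dot (lsubmx y) x + rsubmx y 0 0 * al.
Proof.
rewrite -{1}(hsubmxK y) dot_row_mx; congr (_ + _).
by rewrite /dot big_ord1 !mxE eqxx mulr1n.
Qed.

Section Poly.
Context {R : realType}.
Context {n : nat} {N : 'rV[R]_n -> R}.
Hypothesis hN : is_norm N.
Context {m : nat} {V : 'I_m -> 'rV[R]_n}.
Hypothesis hB : unit_ball N = conv_hull V.

Lemma inB x : N x <= 1 <-> conv_hull V x.
Proof. by have := congr1 (fun S => S x) hB; rewrite /unit_ball /= => <-. Qed.

Lemma V_in j : N (V j) <= 1.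
Proof.
apply/inB; exists (fun i => (i == j)%:R); split.
- by move=> i; rewrite ler0n.
- by rewrite (bigD1 j) //= eqxx big1 ?addr0 // => i /negPf ->.
- rewrite (bigD1 j) //= eqxx scale1r big1 ?addr0 // => i /negPf ->.
  by rewrite scale0r.
Qed.

Lemma conv_dot f x (beta : R) : conv_hull V x -> (forall j, dot f (V j) <= beta) ->
  dot f x <= beta.
Proof.
move=> [w [w0 w1 ->]] h; rewrite dot_sumr.
have -> : beta = \sum_j w j * beta by rewrite -mulr_suml w1 mul1r.
apply: ler_sum => j _; rewrite dotZr; apply: ler_wpM2l => //.
Qed.

Lemma dualbE f : dualb N f <-> feas V (fun=> 1) f.
Proof.
split => [h j|h x /inB xB]; first by rewrite dotC; apply: h; apply: V_in.
by apply: conv_dot xB _ => j; rewrite dotC; apply: h.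
Qed.

Lemma boxD f : feas V (fun=> 1) f -> forall j, `|f 0 j| <= \sum_i N (delta_mx 0 i).
Proof.
move=> /dualbE hf j.
have hs := @le_sum_term _ _ (fun i : 'I_n => N (delta_mx 0 i)) j (fun i => Nge0 hN _).
apply: le_trans hs.
have h1 := dual_le hN f (delta_mx 0 j) hf.
have h2 := dual_le hN f (- delta_mx 0 j) hf.
rewrite dotNr NN // !dot_delta in h1 h2.
by rewrite ler_norml; apply/andP; split; lra.
Qed.

Lemma noline_D : noline V (fun=> 1).
Proof. exact: box_noline _ boxD. Qed.

Lemma norming v : exists f, vertex V (fun=> 1) f /\ dot f v = N v.
Proof.
have [m0 hm0] := box_bound _ (- v) boxD.
have f0 : feas V (fun=> 1) 0 by move=> j; rewrite dot0r ler01.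
have [fs [vfs hfs]] := lp_min _ _ noline_D hm0 _ f0.
exists fs; split => //.
have hmax : forall g, feas V (fun=> 1) g -> dot g v <= dot fs v.
  by move=> g /hfs; rewrite !dotNl lerN2 (dotC g v) (dotC fs v).
have dfs : dualb N fs by apply/dualbE; case: vfs.
apply/eqP; rewrite eq_le dual_le //=.
set s := dot fs v.
have s0 : 0 <= s by have := hmax 0 f0; rewrite dot0l.
rewrite leNgt; apply/negP => lt.
case: (farkas_fin (fun j => row_mx (V j) (-1)%:M) (row_mx v (- s)%:M)).
- move=> [l [l0 e]].
  have ev : v = \sum_j l j *: V j.
    have := congr1 lsubmx e; rewrite row_mxKl linear_sum => ->.
    by apply: eq_bigr => j _; rewrite linearZ /= row_mxKl.
  have es : - s = \sum_j l j * -1.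
    have := congr1 (fun M => rsubmx M 0 0) e; rewrite /= row_mxKr mxE eqxx mulr1n => ->.
    rewrite linear_sum summxE; apply: eq_bigr => j _.
    by rewrite linearZ /= row_mxKr !mxE eqxx mulr1n.
  have : N v <= \sum_j l j.
    rewrite ev; apply: le_trans (Nsum hN _ l V l0) _.
    apply: ler_sum => j _; rewrite -[X in _ <= X]mulr1; apply: ler_wpM2l => //.
    exact: V_in.
  have : s = \sum_j l j by rewrite -[s]opprK es -sumrN; apply: eq_bigr => j _; rewrite mulrN1 opprK.
  lra.
- move=> [y [hy yb]].
  set f := lsubmx y; set mu : R := rsubmx y 0 0.
  have hy' : forall j, dot f (V j) <= mu.
    by move=> j; have := hy j; rewrite dot_hom -/f -/mu; lra.
  rewrite dot_hom -/f -/mu in yb.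
  case: (ltrP 0 mu) => mu0.
    have fg : feas V (fun=> 1) (mu^-1 *: f).
      move=> j; rewrite dotC dotZl mulrC ler_pdivrMr // mul1r; exact: hy'.
    move: (hmax _ fg); rewrite dotZl mulrC ler_pdivrMr // => h.
    rewrite -/s in h; nra.
  have vn0 : v != 0 by apply: contraTneq lt => v0; rewrite /s v0 (N0 hN) /dot big1 ?ltxx // => i _; rewrite mxE mulr0.
  have cx : conv_hull V ((N v)^-1 *: v) by apply/inB; rewrite N_normalize.
  have := conv_dot f _ 0 cx (fun j => le_trans (hy' j) mu0).
  rewrite dotZr pmulr_rle0 ?invr_gt0 ?Ngt0 // => h.
  have c0 : conv_hull V 0 by apply/inB; rewrite (N0 hN) ler01.
  have := conv_dot f 0 mu c0 hy'; rewrite dot0r => mu1.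
  have mu00 : mu = 0 by apply/eqP; rewrite eq_le mu0 mu1.
  rewrite mu00 mul0r addr0 in yb; lra.
Qed.

End Poly.


Section Data.
Context {R : realType}.
Context {n : nat} {N : 'rV[R]_n -> R}.
Hypothesis hN : is_norm N.
Context {m : nat} {V : 'I_m -> 'rV[R]_n}.
Hypothesis hB : unit_ball N = conv_hull V.

Lemma Fdata : exists F : seq 'rV[R]_n, [/\ uniq F,
  (forall f, f \in F -> ext (dual_unit_ball N) f),
  (forall f x, f \in F -> dot f x <= N x) &
  (forall x, exists2 f, f \in F & dot f x = N x)].
Proof.
have [F [uF hF]] := vertices_finite V (fun=> 1).
exists F; split => //.
- move=> f /hF vf; split; first by change (dualb N f); apply/(dualbE hB); case: vf.
  move=> y z t dy dz t0 t1 e.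
  apply: (vertex_extreme f vf y z t) => //; apply/(dualbE hB); [exact: dy | exact: dz].
- move=> f x /hF [ff _]; apply: (dual_le hN); exact/(dualbE hB).
- move=> x; have [f [vf e]] := norming hN hB x; exists f => //; exact/hF.
Qed.

Lemma Edata : exists E : seq 'rV[R]_n, [/\ uniq E,
  (forall e, e \in E -> ext (unit_ball N) e),
  (forall e, e \in E -> N e <= 1) &
  (forall g, exists2 e, e \in E & forall x, N x <= 1 -> dot g x <= dot g e)].
Proof.
have [F [uF extF leF eqF]] := Fdata.
pose aB (i : 'I_(size F)) := F`_i.
pose bB (i : 'I_(size F)) : R := 1.
have feasE : forall x, feas aB bB x <-> N x <= 1.
  move=> x; split.
    move=> h; have [f fF <-] := eqF x.
    have ifF : (index f F < size F)%N by rewrite index_mem.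
    by have := h (Ordinal ifF); rewrite /aB /bB /= nth_index.
  move=> h i; apply: le_trans (leF _ x _) h; exact: mem_nth.
pose C := \sum_j \sum_i `|V i 0 j|.
have box : forall x, feas aB bB x -> forall j, `|x 0 j| <= C.
  move=> x /feasE /(inB hB) [w [w0 w1 ->]] j.
  have hs := @le_sum_term _ _ (fun j : 'I_n => \sum_i `|V i 0 j|) j
     (fun j => sumr_ge0 _ (fun i _ => normr_ge0 _)).
  apply: le_trans hs; rewrite summxE; apply: le_trans (ler_norm_sum _ _ _) _.
  apply: ler_sum => i _; rewrite mxE normrM ger0_norm //.
  rewrite -[X in _ <= X]mul1r; apply: ler_wpM2r => //.
  by rewrite -w1; apply: (@le_sum_term _ _ w i w0).
have nl := box_noline C box.
have [E [uE hE]] := vertices_finite aB bB.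
exists E; split => //.
- move=> e /hE ve; split; first by apply/feasE; case: ve.
  move=> y z t dy dz t0 t1 ee.
  by apply: (vertex_extreme e ve y z t) => //; apply/feasE.
- by move=> e /hE [/feasE].
- move=> g.
  have [m0 hm0] := box_bound C (- g) box.
  have f0 : feas aB bB 0 by apply/feasE; rewrite (N0 hN) ler01.
  have [v [vv hv]] := lp_min _ _ nl hm0 _ f0.
  exists v; first exact/hE.
  by move=> x /feasE /hv; rewrite !dotNl lerN2 (dotC g x) (dotC g v).
Qed.

End Data.


Section Proj.
Context {R : realType}.
Variable n : nat.
Variable Y : 'M[R]_n.

Definition Yb := row_base Y.
Definition Kt := row_base (kermx Yb^T).
Definition hdim := \rank (kermx Yb^T).

Lemma Yb_free : row_free Yb.
Proof. exact: row_base_free. Qed.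

Lemma Q0_ex : exists Q0 : 'M[R]_(n, \rank Y), Yb *m Q0 = 1%:M.
Proof. exact/row_freeP/Yb_free. Qed.

Lemma tr0 p q s (A : 'M[R]_(p, q)) (B : 'M[R]_(s, q)) : B *m A^T = 0 -> A *m B^T = 0.
Proof. by move=> h; apply: trmx_inj; rewrite trmx_mul trmxK h trmx0. Qed.

Lemma YbKt : Yb *m Kt^T = 0.
Proof.
have : (Kt <= kermx Yb^T)%MS by rewrite /Kt eq_row_base.
by move/sub_kermxP; apply: tr0.
Qed.

Definition PG (Q0 : 'M[R]_(n, \rank Y)) (G : 'M[R]_(hdim, \rank Y)) : 'M[R]_n :=
  (Q0 + Kt^T *m G) *m Yb.

Lemma PG_proj Q0 G : Yb *m Q0 = 1%:M -> is_projection Y (PG Q0 G).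
Proof.
move=> hQ; split.
  move=> x; rewrite /PG mulmxA; apply: submx_trans (submxMl _ _) _; by rewrite /Yb eq_row_base.
move=> y yY; have : (y <= Yb)%MS by rewrite /Yb eq_row_base.
case/submxP => D ->.
rewrite /PG (mulmxA (D *m Yb)) -(mulmxA D Yb) mulmxDr hQ (mulmxA Yb) YbKt mul0mx addr0 mulmx1 //.
Qed.

Lemma PG_onto Q0 Q : Yb *m Q0 = 1%:M -> is_projection Y Q -> exists G, Q = PG Q0 G.
Proof.
move=> hQ [h1 h2].
have QY : (Q <= Yb)%MS.
  rewrite /Yb eq_row_base; apply/row_subP => i; rewrite rowE; exact: h1.
have [Z eZ] := submxP QY.
have YQ : Yb *m Q = Yb.
  apply/row_matrixP => i; rewrite row_mul; apply: h2.
  apply: submx_trans (row_sub _ _) _; by rewrite /Yb eq_row_base.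
have YZ : Yb *m Z = 1%:M.
  apply: (row_free_inj Yb_free); by rewrite mul1mx -mulmxA -eZ YQ.
have hk : ((Z - Q0)^T <= kermx Yb^T)%MS.
  apply/sub_kermxP; rewrite -trmx_mul mulmxBr YZ hQ subrr trmx0 //.
have : ((Z - Q0)^T <= Kt)%MS by rewrite /Kt eq_row_base.
case/submxP => H eH.
exists H^T; rewrite eZ /PG; congr (_ *m _).
have e2 : Z - Q0 = Kt^T *m H^T by rewrite -(trmxK (Z - Q0)) eH trmx_mul.
by rewrite -e2 addrC subrK.
Qed.

Lemma PG_inj G : Kt^T *m G *m Yb = 0 -> G = 0.
Proof.
move=> h.
have h1 : Kt^T *m G = 0 by apply: (row_free_inj Yb_free); rewrite h mul0mx.
have h2 : G^T *m Kt = 0 by apply: trmx_inj; rewrite trmx_mul trmxK h1 trmx0.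
apply: trmx_inj; rewrite trmx0; apply/eqP.
by rewrite -(mulmx_free_eq0 _ (row_base_free _)) h2.
Qed.

Lemma hdimE : hdim = (n - \rank Y)%N.
Proof. by rewrite /hdim mxrank_ker mxrank_tr /Yb (eq_row_base Y). Qed.

End Proj.

Arguments Yb {R n} Y.
Arguments Kt {R n} Y.
Arguments hdim {R n} Y.
Arguments PG {R n} Y Q0 G.
Arguments Q0_ex {R n} Y.
Arguments PG_proj {R n Y} Q0 G.
Arguments PG_onto {R n Y} Q0 Q.
Arguments PG_inj {R n Y} G.
Arguments hdimE {R n} Y.


Lemma lin_bound {R : realType} (al be ga : R) : (forall s : R, al + s * be <= ga) -> be = 0.
Proof.
move=> h; apply/eqP; apply: contraT => nz.
have := h ((ga - al + 1) / be); rewrite divfK //; lra.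
Qed.

Lemma seq_ub_in {R : realType} (T : eqType) (s : seq T) (g : T -> R) :
  exists t, forall x, x \in s -> g x <= t.
Proof.
elim: s => [|x s [t ht]]; first by exists 0.
exists (Num.max (g x) t) => y; rewrite inE => /orP[/eqP->|ys]; first by rewrite le_max lexx.
by rewrite le_max ht ?orbT.
Qed.

Lemma mem_nth_ex (T : eqType) (x0 : T) (s : seq T) x : x \in s ->
  exists i : 'I_(size s), nth x0 s i = x.
Proof.
move=> xs; have ix : (index x s < size s)%N by rewrite index_mem.
by exists (Ordinal ix); rewrite /= nth_index.
Qed.

Theorem mainTheorem3 (R : realType) (n k : nat) (N : 'rV[R]_n -> R)
    (Y : 'M[R]_n) :
  polyhedral_norm N -> (1 <= k)%N -> (k <= n - 1)%N -> \rank Y = k ->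
  exists P : 'M[R]_n, minimal_projection N Y P /\
    exists p : 'I_n -> 'rV[R]_n * 'rV[R]_n,
      injective p /\ forall i, norming_pair N P (p i).1 (p i).2.
Proof.
move=> [hN [m [V hB]]] k1 kn rk.
have [E [uE extE NE maxE]] := Edata hN hB.
have [F [uF extF leF eqF]] := Fdata hN hB.
have [Q0 hQ0] := Q0_ex Y.
have fb : forall P, exists t, forall e f, e \in E -> f \in F -> dot f (e *m P) <= t.
  move=> P; have [t ht] := seq_ub_in _ [seq (e, f) | e <- E, f <- F]
    (fun p => dot p.2 (p.1 *m P)).
  by exists t => e f eE fF; apply: (ht (e, f)); apply: allpairs_f.
have o0 : forall P t, (forall e f, e \in E -> f \in F -> dot f (e *m P) <= t) ->
    ubound [set N (x *m P) | x in unit_ball N] t.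
  move=> P t ht y [x xB <-].
  have [f fF <-] := eqF (x *m P).
  rewrite dot_mulmx; have [e eE he] := maxE (f *m P^T).
  apply: le_trans (he x xB) _; rewrite -dot_mulmx; exact: ht.
have o1 : forall P t, (forall e f, e \in E -> f \in F -> dot f (e *m P) <= t) ->
    opnorm N P <= t.
  move=> P t ht; apply: ge_sup; last exact: o0.
  by exists (N (0 *m P)), 0 => //; rewrite /unit_ball /= (N0 hN) ler01.
have o2 : forall P e f, e \in E -> f \in F -> dot f (e *m P) <= opnorm N P.
  move=> P e f eE fF; apply: le_trans (leF f _ fF) _.
  have [t ht] := fb P.
  apply: (ub_le_sup (ex_intro _ t (o0 P t ht))).
  by exists e => //; apply: NE.
set h := hdim Y; set kk := \rank Y.
pose Gof (u : 'rV[R]_(h * kk + 1)) : 'M[R]_(h, kk) := vec_mx (lsubmx u).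
pose tof (u : 'rV[R]_(h * kk + 1)) : R := rsubmx u 0 0.
pose I := ('I_(size E) * 'I_(size F))%type.
pose phi (ij : I) u := dot F`_(ij.2) (E`_(ij.1) *m ((Kt Y)^T *m Gof u *m Yb Y)) - tof u.
have GofL : forall a u v, Gof (a *: u + v) = a *: Gof u + Gof v.
  by move=> a u v; rewrite /Gof !linearD !linearZ.
have tofL : forall a u v, tof (a *: u + v) = a * tof u + tof v.
  by move=> a u v; rewrite /tof !linearD !linearZ /= !mxE.
have phiL : forall ij a u v, phi ij (a *: u + v) = a * phi ij u + phi ij v.
  move=> ij a u v; rewrite /phi GofL tofL mulmxDr mulmxDl -!scalemxAr -!scalemxAl.
  rewrite mulmxDr -scalemxAr dotDr dotZr; ring.
pose aa (ij : I) := \row_l phi ij (delta_mx 0 l).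
pose bb (ij : I) := - dot F`_(ij.2) (E`_(ij.1) *m (Q0 *m Yb Y)).
have aaE : forall ij u, dot (aa ij) u = phi ij u.
  by move=> ij u; rewrite (lin_dot _ _ (phiL ij) u).
pose c := \row_l tof (delta_mx 0 l).
have cE : forall u, dot c u = tof u by move=> u; rewrite (lin_dot _ _ tofL u).
have dotPG : forall f e G, dot f (e *m PG Y Q0 G) =
    dot f (e *m (Q0 *m Yb Y)) + dot f (e *m ((Kt Y)^T *m G *m Yb Y)).
  by move=> f e G; rewrite /PG mulmxDl mulmxDr dotDr.
have feasE : forall u, feas aa bb u <->
    forall ij : I, dot F`_(ij.2) (E`_(ij.1) *m PG Y Q0 (Gof u)) <= tof u.
  move=> u; split => H ij; move: (H ij); rewrite ?aaE /phi dotPG /bb; lra.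
pose mk (G : 'M[R]_(h, kk)) (t : R) : 'rV[R]_(h * kk + 1) := row_mx (mxvec G) t%:M.
have GofK : forall G t, Gof (mk G t) = G by move=> G t; rewrite /Gof /mk row_mxKl mxvecK.
have tofK : forall G t, tof (mk G t) = t.
  by move=> G t; rewrite /tof /mk row_mxKr mxE eqxx mulr1n.
have nl : noline aa bb.
  move=> u d hs.
  have hz : forall ij, phi ij d = 0.
    move=> ij; apply: (@lin_bound _ (phi ij u) _ (bb ij)) => s.
    by move: (hs s ij); rewrite aaE addrC phiL; lra.
  set Dl := (Kt Y)^T *m Gof d *m Yb Y.
  have hD : forall e f, e \in E -> f \in F -> dot f (e *m Dl) = tof d.
    move=> e f eE fF; have [i <-] := mem_nth_ex _ 0 _ _ eE; have [j <-] := mem_nth_ex _ 0 _ _ fF.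
    by have := hz (i, j); rewrite /phi /=; lra.
  have hB' : forall f x, f \in F -> N x <= 1 -> dot f (x *m Dl) = tof d.
    move=> f x fF xB; apply/eqP; rewrite eq_le; apply/andP; split.
      rewrite dot_mulmx; have [e eE he] := maxE (f *m Dl^T).
      by apply: le_trans (he x xB) _; rewrite -dot_mulmx hD.
    have [e eE he] := maxE (- (f *m Dl^T)); move: (he x xB).
    by rewrite !dotNl lerN2 -!dot_mulmx hD.
  have [f0 f0F _] := eqF 0.
  have tau0 : tof d = 0.
    have h0 : N (0 : 'rV[R]_n) <= 1 by rewrite (N0 hN) ler01.
    by have := hB' f0 0 f0F h0; rewrite mul0mx dot0r => <-.
  have xD : forall x : 'rV[R]_n, x *m Dl = 0.
    move=> x; case: (eqVneq x 0) => [->|nz]; first by rewrite mul0mx.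
    have xB : N ((N x)^-1 *: x) <= 1 by rewrite N_normalize.
    have : (N x)^-1 *: x *m Dl = 0.
      have [f fF ef] := eqF ((N x)^-1 *: x *m Dl).
      by case: hN => _ hdef _ _; apply: hdef; rewrite -ef hB' // tau0.
    rewrite -scalemxAl => /eqP; rewrite scaler_eq0 invr_eq0 => /orP[/eqP|/eqP //].
    by move=> Nx0; have := Ngt0 hN x nz; rewrite Nx0 ltxx.
  have D0 : Dl = 0 by apply/row_matrixP => i; rewrite rowE xD row0.
  have G0 : Gof d = 0 := PG_inj _ D0.
  have l0 : lsubmx d = 0.
    rewrite -(vec_mxK (lsubmx d)).
    have -> : vec_mx (lsubmx d) = 0 := G0.
    exact: linear0.
  have r0 : rsubmx d = 0.
    rewrite (mx11_scalar (rsubmx d)).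
    have -> : rsubmx d 0 0 = 0 := tau0.
    by apply/matrixP => i j; rewrite !mxE mul0rn.
  by rewrite -(hsubmxK d) l0 r0 row_mx0.
have [e0 e0E _] := maxE 0.
have [i0 ei0] := mem_nth_ex _ 0 _ _ e0E.
have bnd : forall u, feas aa bb u -> 0 <= dot c u.
  move=> u /feasE fu; rewrite cE.
  have [f fF ef] := eqF (e0 *m PG Y Q0 (Gof u)).
  have [j fj] := mem_nth_ex _ 0 _ _ fF.
  have := fu (i0, j); rewrite /= ei0 fj ef => h1.
  exact: le_trans (Nge0 hN _) h1.
have [t0 ht0] := fb (PG Y Q0 0).
have fu0 : feas aa bb (mk 0 t0).
  apply/feasE => ij; rewrite GofK tofK; apply: ht0; exact: mem_nth.
have [v [vv hmin]] := lp_min _ _ nl bnd _ fu0.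
have fv : feas aa bb v by case: vv.
set Ps := PG Y Q0 (Gof v).
have opE : opnorm N Ps = tof v.
  apply/eqP; rewrite eq_le; apply/andP; split.
    apply: o1 => e f eE fF.
    have [i <-] := mem_nth_ex _ 0 _ _ eE; have [j <-] := mem_nth_ex _ 0 _ _ fF.
    by move/feasE: fv => /(_ (i, j)).
  have : feas aa bb (mk (Gof v) (opnorm N Ps)).
    apply/feasE => ij; rewrite GofK tofK; apply: o2; exact: mem_nth.
  by move/hmin; rewrite !cE tofK.
have minP : minimal_projection N Y Ps.
  split; first exact: PG_proj.
  rewrite /lambda opE.
  set S := [set opnorm N P | P in is_projection Y]%classic.
  have lbS : lbound S (tof v).
    move=> y [Q hQ <-]; have [G ->] := PG_onto Q0 Q hQ0 hQ.
    have : feas aa bb (mk G (opnorm N (PG Y Q0 G))).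
      apply/feasE => ij; rewrite GofK tofK; apply: o2; exact: mem_nth.
    by move/hmin; rewrite !cE tofK.
  have inS : S (tof v) by exists Ps; [exact: PG_proj | exact: opE].
  apply/eqP; rewrite eq_le; apply/andP; split.
    by apply: lb_le_inf => //; exists (tof v).
  by apply: (ge_inf (ex_intro _ (tof v) lbS)).
have hc := vertex_count v vv.
have hn : (n <= #|act aa bb v|)%N.
  apply: leq_trans hc; rewrite /h /kk hdimE rk.
  nia.
exists Ps; split => //.
exists (fun l => let ij := enum_val (widen_ord hn l) in (E`_(ij.1), F`_(ij.2))).
split.
  move=> l1 l2 /= [e1 e2].
  have i12 : (enum_val (widen_ord hn l1)).1 = (enum_val (widen_ord hn l2)).1.
    by apply/val_inj/eqP; rewrite -(nth_uniq 0 _ _ uE) ?ltn_ord // e1.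
  have j12 : (enum_val (widen_ord hn l1)).2 = (enum_val (widen_ord hn l2)).2.
    by apply/val_inj/eqP; rewrite -(nth_uniq 0 _ _ uF) ?ltn_ord // e2.
  have : enum_val (widen_ord hn l1) = enum_val (widen_ord hn l2).
    by move: i12 j12; case: (enum_val _) => ? ?; case: (enum_val _) => ? ? /= -> ->.
  by move/enum_val_inj => /(congr1 val) /= /val_inj.
move=> l /=.
set ij := enum_val (widen_ord hn l).
have : ij \in act aa bb v by apply: enum_valP.
rewrite inE aaE /phi /bb => /eqP hact.
split.
- apply: extE; exact: mem_nth.
- apply: extF; exact: mem_nth.
- change (dot F`_(ij.2) (E`_(ij.1) *m Ps) = opnorm N Ps).
  by rewrite opE /Ps dotPG; lra.
Qed.
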